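(* Let $p(L,M,D;\mu)$ be a generative reasoning model. For every finite $\Delta\subseteq L$, $[\![\Delta]\!]_p^{\max}\neq\emptyset$.
   Context: A generative reasoning model is given by the following data: - a multiset of data $\{d_1,\dots,d_K\}$ with $K\ge1$; - a propositional language $L$ over finitely many atoms, with set of models (truth assignments) $\mathcal M$; - a function $m:\{d_1,\dots,d_K\}\to\mathcal M$ assigning to each datum the model it supports. The induced probability of a model $n$ is $p(n)=|\{k:m(d_k)=n\}|/K$. Notation and definitions: - For $S\subseteq L$, $[\![S]\!]$ is the set of models satisfying every formula of $S$, and $[\![S]\!]_p=\{m\in[\![S]\!]:p(m)\neq0\}$. - A subset $S\subseteq\Delta$ is a maximal possible subset of $\Delta$ if $[\![S]\!]_p\neq\emptyset$ and $[\![S\cup\{\alpha\}]\!]_p=\emptyset$ for all $\alpha\in\Delta\setminus S$. - A cardinality-maximal possible subset is a maximal possible subset of maximum cardinality. - $MPS(\Delta)$ is the set of cardinality-maximal possible subsets of $\Delta$, and $[\![\Delta]\!]_p^{\max}=\bigcup_{S\in MPS(\Delta)}[\![S]\!]_p$. *)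

(* Defs.v *)
From HB Require Import structures.
From mathcomp Require Import all_boot all_algebra.
From mathcomp Require Import finmap.
Set Implicit Arguments. Unset Strict Implicit. Unset Printing Implicit Defensive.
Import GRing.Theory Num.Theory.
Local Open Scope fset_scope.

Inductive pform (A : Type) :=
| Var of A | Top | Bot | Neg of pform A
| And of pform A & pform A | Or of pform A & pform A | Imp of pform A & pform A.
Arguments Top {A}. Arguments Bot {A}.

Section FormCount.
Variable A : countType.
Fixpoint enc (f : pform A) : GenTree.tree A :=
  match f with
  | Var a => GenTree.Leaf a
  | Top => GenTree.Node 0 [::]
  | Bot => GenTree.Node 1 [::]
  | Neg g => GenTree.Node 2 [:: enc g]
  | And g h => GenTree.Node 3 [:: enc g; enc h]
  | Or g h => GenTree.Node 4 [:: enc g; enc h]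
  | Imp g h => GenTree.Node 5 [:: enc g; enc h]
  end.
Fixpoint dec (t : GenTree.tree A) : option (pform A) :=
  match t with
  | GenTree.Leaf a => Some (Var a)
  | GenTree.Node 0 [::] => Some Top
  | GenTree.Node 1 [::] => Some Bot
  | GenTree.Node 2 [:: t1] => omap (@Neg A) (dec t1)
  | GenTree.Node 3 [:: t1; t2] =>
      if dec t1 is Some g then omap (And g) (dec t2) else None
  | GenTree.Node 4 [:: t1; t2] =>
      if dec t1 is Some g then omap (Or g) (dec t2) else None
  | GenTree.Node 5 [:: t1; t2] =>
      if dec t1 is Some g then omap (Imp g) (dec t2) else None
  | _ => None
  end.
Lemma encK : pcancel enc dec.
Proof. by elim=> //= [g -> | g -> h -> | g -> h -> | g -> h ->]. Qed.
HB.instance Definition _ := Countable.copy (pform A) (pcan_type encK).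
End FormCount.

Section GRM.
Variable A : finType.

Definition model := {ffun A -> bool}.

Fixpoint sat (n : model) (f : pform A) : bool :=
  match f with
  | Var a => n a
  | Top => true
  | Bot => false
  | Neg g => ~~ sat n g
  | And g h => sat n g && sat n h
  | Or g h => sat n g || sat n h
  | Imp g h => sat n g ==> sat n h
  end.

(* Generative reasoning model: K data d_1..d_K (indexed by 'I_K, so repetitions
   are allowed, i.e. a multiset), each datum supporting the model m (d k). *)
Variables (D : Type) (K : nat) (d : 'I_K -> D) (m : D -> model).

Definition prob (n : model) : rat :=
  ((#|[set k : 'I_K | m (d k) == n]|)%:R / K%:R)%R.

Definition sem (S : {fset pform A}) : {set model} :=
  [set n | [forall f : S, sat n (val f)]].

Definition sem_p (S : {fset pform A}) : {set model} :=
  [set n in sem S | (prob n != 0)%R].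

Definition maximal_possible (Delta S : {fset pform A}) : Prop :=
  S `<=` Delta /\ sem_p S != set0 /\
  forall a, a \in Delta -> a \notin S -> sem_p (a |` S) = set0.

Definition card_max_possible (Delta S : {fset pform A}) : Prop :=
  maximal_possible Delta S /\
  forall S', maximal_possible Delta S' -> (#|` S'| <= #|` S|)%N.

Definition in_sem_p_max (Delta : {fset pform A}) (n : model) : Prop :=
  exists S, card_max_possible Delta S /\ n \in sem_p S.
End GRM.

(* Main.v *)
Require Import Defs.
From HB Require Import structures.
From mathcomp Require Import all_boot all_algebra.
From mathcomp Require Import finmap.
Import GRing.Theory Num.Theory.
Local Open Scope fset_scope.

Theorem lemma2 (A : finType) (D : Type) (K : nat) (hK : (0 < K)%N)
    (d : 'I_K -> D) (m : D -> model A) (Delta : {fset pform A}) :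
  exists n : model A, in_sem_p_max d m Delta n.
Proof.
set good := fun S : {fset pform A} => (S `<=` Delta) && (sem_p d m S != set0).
have g0 : good fset0.
  rewrite /good fsub0set /=; apply/set0Pn.
  exists (m (d (Ordinal hK))).
  rewrite !inE; apply/andP; split.
    by apply/forallP => -[f fP]; by have := fP; rewrite in_fset0.
  rewrite /prob mulf_neq0 //; first rewrite pnatr_eq0 cards_eq0.
    by apply/set0Pn; exists (Ordinal hK); rewrite inE.
  by rewrite invr_eq0 pnatr_eq0 -lt0n.
pose P := fun k => has (fun S => good S && (#|` S| == k)) (fpowerset Delta).
have exP : exists k, P k.
  exists 0%N; apply/hasP; exists fset0; first by rewrite fpowersetE fsub0set.
  by rewrite g0 cardfs0.
have bnd : forall k, P k -> (k <= #|` Delta|)%N.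
  move=> k /hasP [S _ /andP [/andP [sD _] /eqP <-]].
  exact: fsubset_leq_card.
case: (ex_maxnP exP bnd) => k /hasP [S _ /andP [gS /eqP cS]] maxk.
have gmax : forall S', good S' -> (#|` S'| <= #|` S|)%N.
  move=> S' gS'; rewrite cS; apply: maxk; apply/hasP; exists S'.
    by rewrite fpowersetE; case/andP: gS'.
  by rewrite gS' eqxx.
have mpS : maximal_possible d m Delta S.
  case/andP: gS => sD ne; split => //; split => // a aD aS.
  apply/eqP; apply/negPn/negP => ne'.
  have : good (a |` S) by rewrite /good ne' andbT fsubUset fsub1set aD sD.
  move/gmax; by rewrite cardfsU1 aS ltnn.
case/andP: (gS) => _ /set0Pn [n nS].
exists n, S; split => //; split => // S' [sD [ne _]].
by apply: gmax; rewrite /good sD ne.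
Qed.
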